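(* In algorithm StochKnap with parameter $C>1$, suppose the critical scale satisfies $\kappa>1$. Then for every subset $O\subseteq N$ with $c(O)\le B$, we have $\sum_{i\in S\setminus O}r_\kappa(i)\ge\frac{\epsilon(C-1)}{2}$, where $S=S_\kappa$ is the output.
   Context: Algorithm StochKnap$(N,c,R,B,\epsilon)$ with parameter $C>0$: $N$ is a finite set of items, item $i$ has cost $c(i)>0$ and a nonnegative random reward $R(i)$, rewards independent; $W\ge1$ is an integer with $\sum_{i\in N}\mathbb E[R(i)]\le W$; $B>0$, $\epsilon\in(0,1)$. Let $T=\{i\in N: c(i)\le B\}$ and $D=CB$. For $\tau>0$ let $r_\tau(i)=\mathbb E[\min\{R(i)/\tau,1\}]$. Order $T$ as $i_1,i_2,\ldots$ with $r_\tau(i_j)/c(i_j)$ nonincreasing. If $c(T)\ge D$, let $t$ be the smallest index with $\sum_{j\le t}c(i_j)\ge D$, set $S_\tau=\{i_1,\ldots,i_t\}$ and slope $s_\tau=r_\tau(i_t)/c(i_t)$; otherwise $S_\tau=T$, $s_\tau=0$. Scale $\tau$ is rich if $s_\tau>\epsilon/B$, poor otherwise. Scales $\mathcal G=\{2^\ell:\ell\in\mathbb Z,0\le\ell\le\lceil\log_2W\rceil\}$; critical scale $\kappa$ = smallest poor scale in $\mathcal G$ (assumed to exist); output $S=S_\kappa$. *)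

(* Defs.v *)
From HB Require Import structures.
From mathcomp Require Import all_boot all_order all_algebra.
From mathcomp Require Import all_classical all_reals all_analysis.
Set Implicit Arguments.
Unset Strict Implicit.
Unset Printing Implicit Defensive.
Import Order.TTheory GRing.Theory Num.Theory.
Local Open Scope classical_set_scope.
Local Open Scope ring_scope.

Section Prob.
Context {d} {T : measurableType d} {R : realType} (P : probability T R) {I : finType}.

Definition mutually_independent (X : I -> {RV P >-> R}) : Prop :=
  forall (J : {set I}) (A : I -> set R), (forall i, measurable (A i)) ->
    P (\big[setI/setT]_(i in J) (X i @^-1` A i)) =
    (\prod_(i in J) P (X i @^-1` A i))%E.

(* r_tau(i) = E[min(R(i)/tau, 1)]  (a value in [0,1], hence finite). *)
Definition rtrunc (X : I -> {RV P >-> R}) (tau : R) (i : I) : R :=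
  fine ('E_P[fun w => Num.min (X i w / tau) 1]).

End Prob.

Section Greedy.
Context {R : realType} {I : finType}.
Implicit Types (c r : I -> R) (s : seq I) (D B : R).

Definition eligible c B : {set I} := finset (fun i => c i <= B).

Definition valid_order r c (T0 : {set I}) s : Prop :=
  perm_eq s (enum T0) /\ sorted (fun i j => r j / c j <= r i / c i) s.

Definition prefix_cost c s (k : nat) : R := \sum_(i <- take k s) c i.

Definition cut_index c D s : nat :=
  find (fun k => D <= prefix_cost c s k) (iota 0 (size s).+1).

Definition greedy_set c D (T0 : {set I}) s : {set I} :=
  if D <= \sum_(i in T0) c i then finset (fun i => i \in take (cut_index c D s) s)
  else T0.

(* s_tau = r(i_t)/c(i_t)  (i_t is the last element of the prefix i_1..i_t) *)
Definition greedy_slope r c D (T0 : {set I}) s : R :=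
  if D <= \sum_(i in T0) c i then
    match rev (take (cut_index c D s) s) with
    | i :: _ => r i / c i
    | [::] => 0
    end
  else 0.

End Greedy.

(* Main.v *)
Require Import Defs.
From HB Require Import structures.
From mathcomp Require Import all_boot all_order all_algebra.
From mathcomp Require Import all_classical all_reals all_analysis.
Import Order.TTheory GRing.Theory Num.Theory.
From mathcomp Require Import ring lra.
Local Open Scope ring_scope.
Section G.
Variables (R : realType) (I : finType).

Lemma sum_sub (A B : {pred I}) (F : I -> R) : (forall i, 0 <= F i) ->
  {subset A <= B} -> \sum_(i in A) F i <= \sum_(i in B) F i.
Proof.
move=> F0 AB; rewrite [X in _ <= X](bigID (fun i => i \in A)) /=.
rewrite -[X in X <= _]addr0; apply: lerD; last exact: sumr_ge0.
rewrite le_eqVlt; apply/orP; left; apply/eqP; apply: eq_bigl => i.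
by case iA: (i \in A); rewrite ?andbT ?andbF // (AB _ iA).
Qed.

Variables (c r : I -> R) (D : R) (T0 : {set I}) (s : seq I).
Hypotheses (cpos : forall i, 0 < c i) (vo : valid_order r c T0 s).
Let rat i := r i / c i.

Lemma sorted_nth j k x0 : (j <= k < size s)%N -> rat (nth x0 s k) <= rat (nth x0 s j).
Proof.
move=> /andP[jk ks].
have tr : transitive (fun i j => rat j <= rat i).
  by move=> y x z /= h1 h2; exact: le_trans h2 h1.
apply: (sorted_leq_nth tr (fun x => lexx _) x0 vo.2) => //.
  by rewrite inE (leq_ltn_trans jk ks).
Qed.

Lemma sum_s : \sum_(i <- s) c i = \sum_(i in T0) c i.
Proof. by rewrite (perm_big _ vo.1) big_enum. Qed.

Lemma uniq_s : uniq s.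
Proof. by rewrite (perm_uniq vo.1) enum_uniq. Qed.

Lemma mem_s i : (i \in s) = (i \in T0).
Proof. by rewrite (perm_mem vo.1) mem_enum. Qed.

Lemma cut_spec : D <= \sum_(i in T0) c i ->
  [/\ (cut_index c D s <= size s)%N, D <= prefix_cost c s (cut_index c D s) &
   forall k, (k < cut_index c D s)%N -> prefix_cost c s k < D].
Proof.
move=> hD.
set P := fun k => D <= prefix_cost c s k.
have hP : has P (iota 0 (size s).+1).
  apply/hasP; exists (size s).
    by rewrite mem_iota add0n ltnS leqnn.
  by rewrite /P /prefix_cost take_size sum_s.
have := hP; rewrite has_find size_iota => hlt.
split.
- by rewrite /cut_index -ltnS.
- have := nth_find 0 hP; rewrite nth_iota //.
- move=> k hk.
  have := before_find 0 hk; rewrite nth_iota; last exact: ltn_trans hk hlt.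
  rewrite /P add0n => h; by rewrite ltNge h.
Qed.

Lemma greedy_memE i : D <= \sum_(i in T0) c i ->
  (i \in greedy_set c D T0 s) = (i \in take (cut_index c D s) s).
Proof. by move=> hD; rewrite /greedy_set hD inE. Qed.

Lemma greedy_cost : D <= \sum_(i in T0) c i ->
  D <= \sum_(i in greedy_set c D T0 s) c i.
Proof.
move=> hD; have [_ h _] := cut_spec hD.
rewrite (eq_bigl (fun i => i \in take (cut_index c D s) s)); last first.
  by move=> i; rewrite greedy_memE.
by rewrite -big_uniq ?take_uniq ?uniq_s.
Qed.

Lemma greedy_pos i : D <= \sum_(i in T0) c i ->
  i \in greedy_set c D T0 s ->
  exists j, [/\ (j < cut_index c D s)%N, (j < size s)%N & i = nth i s j].
Proof.
move=> hD; rewrite greedy_memE // => hi.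
have [ts _ _] := cut_spec hD.
exists (index i (take (cut_index c D s) s)).
have hj := hi; rewrite -index_mem size_takel // in hj.
split => //; first exact: leq_trans hj ts.
by rewrite -(nth_take _ hj) nth_index.
Qed.

Lemma greedy_ratio_lb rho (H : {set I}) : D <= \sum_(i in T0) c i ->
  D <= \sum_(i in H) c i -> (forall i, i \in H -> i \in T0) ->
  (forall i, i \in H -> rho < rat i) ->
  forall i, i \in greedy_set c D T0 s -> rho < rat i.
Proof.
move=> hD hH HT Hr i /(greedy_pos _ hD) [j [jt js ->]].
have [ts _ hk] := cut_spec hD.
rewrite ltNge; apply/negP => hle.
have := hk _ jt; rewrite ltNge => /negP; apply.
apply: (le_trans hH); rewrite /prefix_cost big_uniq ?take_uniq ?uniq_s //.
apply: sum_sub => [x|x xH]; first exact: ltW.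
have xs : x \in s by rewrite mem_s HT.
have kx := xs; rewrite -index_mem in kx.
case: (ltnP (index x s) j) => kj.
  have jsz : (j <= size s)%N by exact: ltnW.
  by rewrite -(nth_index x xs) -(nth_take _ kj) mem_nth // size_takel.
have := @sorted_nth j (index x s) x; rewrite kj kx /= nth_index //.
move=> /(_ isT) h; have := Hr _ xH.
have : rat x <= rho.
  apply: le_trans h _; apply: le_trans hle; rewrite (set_nth_default i) //.
by move=> a b; have := lt_le_trans b a; rewrite ltxx.
Qed.

Lemma rich a : 0 <= a -> a < greedy_slope r c D T0 s ->
  D <= \sum_(i in T0) c i /\ forall i, i \in greedy_set c D T0 s -> a < rat i.
Proof.
move=> a0; rewrite /greedy_slope; case: ifP => hD; last first.
  by move=> h; have := le_lt_trans a0 h; rewrite ltxx.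
move=> H; split => //.
have [ts _ _] := cut_spec hD.
have ht : size (take (cut_index c D s) s) = cut_index c D s by rewrite size_takel.
move: H ht; set u := take _ s => H ht.
have hu : u = take (cut_index c D s) s by [].
move: H ht hu; case/lastP: u => [|p x] H ht hu.
  by have := le_lt_trans a0 H; rewrite ltxx.
move: H; rewrite rev_rcons => hx i /(greedy_pos _ hD) [j [jt js ->]].
rewrite size_rcons in ht.
have hp : (size p < cut_index c D s)%N by rewrite -ht.
have hxp : x = nth x s (size p).
  by rewrite -(nth_take _ hp) -hu nth_rcons ltnn eqxx.
apply: (lt_le_trans hx); change (rat x <= rat (nth i s j)).
rewrite (set_nth_default x i js) [X in rat X <= _]hxp.

apply: sorted_nth; rewrite -ltnS ht jt /=.
exact: ts.
Qed.

End G.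
Section Pr.
Local Open Scope ereal_scope.
Local Open Scope ring_scope.
Context (d : measure_display) (T : measurableType d) (R : realType)
    (P : probability T R) (I : finType) (X : I -> {RV P >-> R}).
Hypothesis X0 : forall i w, 0 <= X i w.

Lemma pw (x a : R) : 0 <= x -> 0 < a ->
  Num.min (x / a) 1 <= Num.min (x / (2 * a)) 1 * 2.
Proof.
move=> x0 a0.
have -> : x / (2 * a) = (x / a) / 2 by rewrite invfM mulrA mulrAC.
have : 0 <= x / a by rewrite divr_ge0 // ltW.
move: (x / a) => y y0.
rewrite /Num.min /Order.min.
case: ifP => h1; case: ifP => h2; lra.
Qed.

Let g (tau : R) i := fun w => Num.min (X i w / tau) 1.

Lemma g_meas tau i : measurable_fun setT (g tau i).
Proof.
apply: (@measurable_realfun.measurable_minr _ _ _ setT (fun w => X i w / tau) (cst 1)); last exact: measurable_cst.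
exact: (@measurable_realfun.measurable_funM _ _ _ setT (X i) (cst tau^-1)).
Qed.

Lemma g_ge0 tau i w : 0 < tau -> 0 <= g tau i w.
Proof.
move=> t0; rewrite /g; rewrite le_min ler01 andbT.
by rewrite divr_ge0 // ltW.
Qed.

Lemma Eg tau i : 0 < tau ->
  'E_P[g tau i] = (rtrunc X tau i)%:E /\ 0 <= rtrunc X tau i.
Proof.
move=> t0.
have h0 : (0 <= 'E_P[g tau i])%E by apply: expectation_ge0 => w; exact: g_ge0.
have h1 : ('E_P[g tau i] <= 1)%E.
  rewrite -(expectation_cst P 1); apply: expectation_le.
  - exact: g_meas.
  - exact: measurable_cst.
  - by move=> w; exact: g_ge0.
  - by move=> w; rewrite /= ler01.
  - by apply: aeW => w; rewrite /g ge_min lexx orbT.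
have fin : 'E_P[g tau i] \is a fin_num.
  by rewrite ge0_fin_numE // (le_lt_trans h1) // ltry.
rewrite /rtrunc -/(g tau i) fineK //; split => //.
by rewrite -lee_fin fineK.
Qed.

Lemma rt_double tau i : 0 < tau -> rtrunc X tau i <= 2 * rtrunc X (2 * tau) i.
Proof.
move=> t0.
have t20 : 0 < 2 * tau by rewrite mulr_gt0.
have [e1 _] := @Eg tau i t0; have [e2 _] := @Eg (2*tau) i t20.
rewrite -lee_fin EFinM -e1 -e2.
have -> : (2%:E * 'E_P[g (2 * tau) i] = 'E_P[(2 : R) \o* g (2 * tau) i])%E.
  rewrite !unlock -ge0_integralZl_EFin //.
  by apply: eq_integral => w _ /=; rewrite EFinM muleC.
  by move=> w _; rewrite lee_fin g_ge0.
  by apply/measurable_realfun.measurable_EFinP; exact: g_meas.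
apply: expectation_le.
- exact: g_meas.
- exact: (measurable_realfun.measurable_funM (g_meas (2*tau) i) (@measurable_cst _ _ _ _ setT (2:R))).
- by move=> w; exact: g_ge0.
- by move=> w; rewrite /= mulr_ge0 // g_ge0.
- apply: aeW => w; rewrite /g /=.
  exact: (pw _ _ (X0 i w) t0).
Qed.

End Pr.
(* Scales are 2^l for 0 <= l <= ceil(log2 W) = up_log 2 W; the critical scale
   is kappa = 2^l0, and kappa > 1 means 0 < l0.  ord l is the order chosen
   by the algorithm at scale 2^l. *)
Theorem mainTheorem9 (d : measure_display) (T : measurableType d) (R : realType)
    (P : probability T R) (I : finType) (c : I -> R) (X : I -> {RV P >-> R})
    (W : nat) (B eps C : R) (ord : nat -> seq I) (l0 : nat) :
  (forall i, 0 < c i) ->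
  (forall i w, 0 <= X i w) ->
  mutually_independent X ->
  (1 <= W)%N ->
  (\sum_(i : I) 'E_P[X i] <= (W%:R)%:E)%E ->
  0 < B -> 0 < eps -> eps < 1 -> 1 < C ->
  (forall l, (l <= up_log 2 W)%N ->
     valid_order (rtrunc X (2 ^+ l)) c (eligible c B) (ord l)) ->
  let slope l := greedy_slope (rtrunc X (2 ^+ l)) c (C * B) (eligible c B) (ord l) in
  (l0 <= up_log 2 W)%N ->
  slope l0 <= eps / B ->
  (forall l, (l < l0)%N -> eps / B < slope l) ->
  (0 < l0)%N ->
  forall O : {set I}, \sum_(i in O) c i <= B ->
    eps * (C - 1) / 2 <=
    \sum_(i in greedy_set c (C * B) (eligible c B) (ord l0) :\: O)
        rtrunc X (2 ^+ l0) i.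
Proof.
move=> cpos X0 indep W1 EW B0 e0 e1 C1 vo slope hl0 hs0 hsl l0pos O hO.
have hl : l0 = l0.-1.+1 by rewrite prednK.
move: hl0 hs0 hsl vo; rewrite {}hl; set l := l0.-1 => hl0 hs0 hsl vo.
have vl := vo l (leq_trans (leqnSn l) hl0).
have vl0 := vo l.+1 hl0.
have rl := hsl l (ltnSn l).
set D := C * B.
set T0 := eligible c B.
set r1 := rtrunc X (2 ^+ l).
set r2 := rtrunc X (2 ^+ l.+1).
have eB0 : 0 <= eps / B by rewrite divr_ge0 // ltW.
have [hD Hr1] := @rich R I c r1 D T0 (ord l) vl (eps / B) eB0 rl.
set rho := eps / B / 2.
have Hr2 : forall i, i \in greedy_set c D T0 (ord l) -> rho < r2 i / c i.
  move=> i hi; have h1 := Hr1 i hi.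
  have t0 : 0 < (2:R) ^+ l by rewrite exprn_gt0.
  have hd := @rt_double d T R P I X X0 (2 ^+ l) i t0.
  rewrite -exprS in hd.
  have : r1 i / c i <= 2 * r2 i / c i.
    by apply: ler_wpM2r; [rewrite invr_ge0 ltW | exact: hd].
  rewrite -mulrA; rewrite /rho; move: h1; rewrite -/r1 -/r2; lra.
have HT : forall i, i \in greedy_set c D T0 (ord l) -> i \in T0.
  move=> i /(@greedy_pos R I c r1 D T0 (ord l) vl i hD) [j [_ js ->]].
  by rewrite -(@mem_s R I c r1 T0 (ord l) vl) mem_nth.
have hc1 := @greedy_cost R I c r1 D T0 (ord l) vl hD.
have Hr3 := @greedy_ratio_lb R I c r2 D T0 (ord l.+1) cpos vl0 rho _ hD hc1 HT Hr2.
have hc2 := @greedy_cost R I c r2 D T0 (ord l.+1) vl0 hD.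
set G := greedy_set c D T0 (ord l.+1).
have rho0 : 0 <= rho by rewrite /rho divr_ge0.
have hsum : D - B <= \sum_(i in G :\: O) c i.
  have := hc2; rewrite -/G (@big_setID _ _ _ _ G O) /=.
  have : \sum_(i in G :&: O) c i <= \sum_(i in O) c i.
    apply: sum_sub => [i|i]; first exact: ltW.
    by rewrite inE => /andP[].
  move: hO; lra.
have hfin : rho * (D - B) = eps * (C - 1) / 2.
  rewrite /rho /D; field.
  by rewrite lt0r_neq0.
rewrite -hfin; apply: (le_trans (ler_wpM2l rho0 hsum)).
rewrite mulr_sumr; apply: ler_sum => i hi.
move: hi; rewrite inE => /andP[_ hi].
have := Hr3 i hi.
by rewrite ltr_pdivlMr // mulrC => /ltW.
Qed.
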